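(* Let $(X,d)$ be a metric space. If $\operatorname{asdim}_{AN}(X,\log(1+d))\le n$, then $(X,d)$ has an $n$-dimensional control function which is a polynomial.
   Context: For $s>0$, an $s$-scale chain between points $x,y$ of a metric space is a finite sequence $x=x_0,\dots,x_m=y$ with $d(x_i,x_{i+1})<s$. The $s$-scale connected components of a subset $U$ are the classes of the relation ''joined by an $s$-scale chain inside $U$''. A nondecreasing $D\colon\mathbb{R}_+\to\mathbb{R}_+$ is an $n$-dimensional control function of $X$ if for every $s>0$ there is a cover $\{\mathcal U_0,\dots,\mathcal U_n\}$ of $X$ such that the $s$-scale connected components of each $\mathcal U_i$ have diameter at most $D(s)$. $\operatorname{asdim}_{AN}(X,d)\le n$ means $X$ has an $n$-dimensional control function of the form $D(s)=Cs+k$ with constants $C>0$, $k\in\mathbb{R}$. $\log(1+d)$ denotes the metric $(x,y)\mapsto\log(1+d(x,y))$. *)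

(* Defs.v *)
From Stdlib Require Import Reals List.
Open Scope R_scope.

Definition is_metric {X : Type} (d : X -> X -> R) : Prop :=
  (forall x y, 0 <= d x y) /\
  (forall x y, d x y = 0 <-> x = y) /\
  (forall x y, d x y = d y x) /\
  (forall x y z, d x z <= d x y + d y z).

Definition log1p_metric {X : Type} (d : X -> X -> R) : X -> X -> R :=
  fun x y => ln (1 + d x y).

Inductive s_chain {X : Type} (d : X -> X -> R) (s : R) (U : X -> Prop) : X -> X -> Prop :=
| s_chain_refl : forall x, U x -> s_chain d s U x x
| s_chain_step : forall x z y, U x -> d x z < s -> s_chain d s U z y -> s_chain d s U x y.

(* the s-scale connected components of U have diameter at most b *)
Definition s_components_diam_le {X : Type} (d : X -> X -> R) (s : R) (U : X -> Prop) (b : R) : Prop :=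
  forall x y, s_chain d s U x y -> d x y <= b.

Definition is_control_function {X : Type} (d : X -> X -> R) (n : nat) (D : R -> R) : Prop :=
  (forall s, 0 <= s -> 0 <= D s) /\
  (forall s t, 0 <= s -> s <= t -> D s <= D t) /\
  (forall s, 0 < s ->
     exists U : nat -> X -> Prop,
       (forall x, exists i, (i <= n)%nat /\ U i x) /\
       (forall i, (i <= n)%nat -> s_components_diam_le d s (U i) (D s))).

Definition asdim_AN_le {X : Type} (d : X -> X -> R) (n : nat) : Prop :=
  exists C k : R, 0 < C /\ is_control_function d n (fun s => C * s + k).

(* evaluation of a real polynomial given by its coefficient list c0, c1, ... *)
Fixpoint poly_eval (p : list R) (x : R) : R :=
  match p with
  | nil => 0
  | a :: q => a + x * poly_eval q x
  end.

(* Main.v *)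
Require Import Defs.
From Stdlib Require Import Reals List Lra Lia ZArith.
Open Scope R_scope.

Fixpoint padd (p q : list R) : list R :=
  match p, q with
  | nil, _ => q
  | _, nil => p
  | a :: p', b :: q' => (a + b) :: padd p' q'
  end.

Lemma padd_eval p q x : poly_eval (padd p q) x = poly_eval p x + poly_eval q x.
Proof.
  revert q; induction p as [|a p IH]; intros [|b q]; simpl; try lra.
  rewrite IH; ring.
Qed.

Fixpoint pw (a : R) (N : nat) : list R :=
  match N with
  | O => a :: nil
  | S m => padd (pw a m) (0 :: pw a m)
  end.

Lemma pw_eval a N x : poly_eval (pw a N) x = a * (1 + x) ^ N.
Proof.
  induction N; simpl.
  - ring.
  - rewrite padd_eval; simpl; rewrite IHN; ring.
Qed.

Lemma chain_conv {X : Type} (d : X -> X -> R) s U x y :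
  (forall x y, 0 <= d x y) -> 0 < s ->
  s_chain d s U x y -> s_chain (log1p_metric d) (ln (1 + s)) U x y.
Proof.
  intros Hpos Hs H; induction H.
  - now constructor.
  - eapply s_chain_step; eauto.
    unfold log1p_metric. apply ln_increasing; [specialize (Hpos x z); lra | lra].
Qed.

Theorem corollary2p4 (X : Type) (d : X -> X -> R) (n : nat) :
  is_metric d ->
  asdim_AN_le (log1p_metric d) n ->
  exists p : list R, is_control_function d n (poly_eval p).
Proof.
  intros [Hpos _] [C [k [HC [_ [_ Hcov]]]]].
  set (N := Z.to_nat (up C)).
  assert (HN : C <= INR N).
  { destruct (archimed C) as [H1 _].
    assert (Hz : (0 < up C)%Z) by (apply lt_IZR; simpl; lra).
    unfold N. rewrite INR_IZR_INZ, Z2Nat.id by lia. lra. }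
  exists (pw (exp k) N).
  split; [|split].
  - intros s Hs; rewrite pw_eval.
    apply Rmult_le_pos; [left; apply exp_pos | apply pow_le; lra].
  - intros s t Hs Hst; rewrite !pw_eval.
    apply Rmult_le_compat_l; [left; apply exp_pos|].
    apply pow_incr; lra.
  - intros s Hs.
    assert (Hl : 0 < ln (1 + s)).
    { rewrite <- ln_1. apply ln_increasing; lra. }
    destruct (Hcov _ Hl) as [U [HU1 HU2]].
    exists U; split; [exact HU1|].
    intros i Hi x y Hch.
    pose proof (HU2 i Hi x y (chain_conv d s (U i) x y Hpos Hs Hch)) as Hd.
    unfold log1p_metric in Hd. rewrite pw_eval.
    assert (Hd2 : ln (1 + d x y) <= INR N * ln (1 + s) + k).
    { assert (C * ln (1+s) <= INR N * ln (1+s)) by (apply Rmult_le_compat_r; lra).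
      lra. }
    assert (Hpd := Hpos x y).
    assert (Hd3 : exp (ln (1 + d x y)) <= exp (INR N * ln (1 + s) + k)) by (destruct Hd2 as [Hd2|Hd2]; [left; apply exp_increasing; exact Hd2 | rewrite Hd2; lra]).
    clear Hd2; rename Hd3 into Hd2.
    rewrite exp_ln in Hd2 by lra.
    rewrite exp_plus in Hd2.
    replace (exp (INR N * ln (1 + s))) with (Rpower (1 + s) (INR N)) in Hd2
      by reflexivity.
    rewrite Rpower_pow in Hd2 by lra.
    lra.
Qed.
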